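(* Let $G$ be a directed acyclic graph with $n$ vertices labelled $v_1,\ldots,v_n$ in a topological order (every edge goes from some $v_a$ to some $v_b$ with $a<b$), with real edge lengths, and let $\varepsilon>0$ and $q=(1+\varepsilon)^{1/(n+1)}$. Let $\tau$ and $\tau'$ be the functions defined in the context. Then for all integers $i,j$ with $1\le i\le n$ and $i\le j$, $$\tau(v_i,q^{j-i})\;\le\;\tau'(v_i,q^j)\;\le\;\tau(v_i,q^j).$$
   Context: For a vertex $v_i$ and a real number $x\ge 0$, $\tau(v_i,x)$ is the infimum of all real $L'$ such that there are at least $x$ directed paths from $v_1$ to $v_i$ of length (sum of edge lengths) at most $L'$, with $\inf\emptyset=\infty$; the trivial path from $v_1$ to itself has length $0$, so $\tau(v_1,0)=-\infty$, $\tau(v_1,x)=0$ for $0<x\le 1$, $\tau(v_1,x)=\infty$ for $x>1$. For a vertex $v_i$ with $i>1$, let $p_1,\ldots,p_d$ be the tails of the edges entering $v_i$ and $l_1,\ldots,l_d$ the lengths of these edges. The function $\tau'$ is defined on pairs $(v_i,y)$ with $y=0$ or $y=q^j$ for an integer $j$ by: $\tau'(v_1,0)=-\infty$, $\tau'(v_1,y)=0$ for $0<y\le 1$, $\tau'(v_1,y)=\infty$ for $y>1$, and for $i>1$, $$\tau'(v_i,q^j)=\min_{\substack{\alpha_1,\ldots,\alpha_d\ge 0\\ \sum_s\alpha_s=1}}\ \max_{s}\Big(\tau'\big(p_s,q^{\lfloor j+\log_q\alpha_s\rfloor}\big)+l_s\Big),$$ where $q^{\lfloor j+\log_q\alpha_s\rfloor}$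 is interpreted as $0$ when $\alpha_s=0$, and $\tau'(v_i,0)=-\infty$ for every $i$. *)

(* Defs.v *)
From HB Require Import structures.
From mathcomp Require Import all_boot all_order all_algebra.
From mathcomp Require Import all_classical all_reals all_analysis.
Set Implicit Arguments. Unset Strict Implicit. Unset Printing Implicit Defensive.
Import Order.TTheory GRing.Theory Num.Theory.
Local Open Scope ring_scope.

(* Graph: vertices 'I_n (index k stands for v_{k+1}, so index 0 is v_1);
   edges 'I_m, edge e goes from tl e to hd e with length len e. *)

Fixpoint is_path (n m : nat) (tl hd : 'I_m -> 'I_n) (u : nat) (p : seq 'I_m)
    (v : 'I_n) : bool :=
  match p with
  | [::] => u == val v
  | e :: p' => (val (tl e) == u) && is_path tl hd (val (hd e)) p' v
  end.

Definition path_len (R : realType) (m : nat) (len : 'I_m -> R) (p : seq 'I_m) : R :=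
  \sum_(e <- p) len e.

(* tau(v, x) = inf { L' | there are at least x directed paths from v_1 to v
   of length at most L' }, in the extended reals (inf of empty set = +oo). *)
Definition tau (R : realType) (n m : nat) (tl hd : 'I_m -> 'I_n) (len : 'I_m -> R)
    (v : 'I_n) (x : R) : \bar R :=
  ereal_inf [set L%:E | L in [set L : R | exists s : seq (seq 'I_m),
      [/\ uniq s,
          (forall p, p \in s -> is_path tl hd 0 p v /\ path_len len p <= L)
        & x <= (size s)%:R]]].

(* Argument y of tau' : None encodes y = 0, Some j encodes y = q^j. *)
Definition tau'_step (R : realType) (n m : nat) (tl hd : 'I_m -> 'I_n)
    (len : 'I_m -> R) (q : R) (f : 'I_n -> option int -> \bar R)
    (v : 'I_n) (y : option int) : \bar R :=
  match y with
  | None => -oo%E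
  | Some j =>
    if val v == 0%N then (if q ^ j <= 1 then 0%E else +oo%E)
    else ereal_inf
      [set (\big[maxe/-oo%E]_(e | hd e == v)
              (f (tl e) (if alpha e == 0%R then None
                         else Some (Num.floor (j%:~R + ln (alpha e) / ln q)%R))
               + (len e)%:E)%E)
      | alpha in [set alpha : 'I_m -> R |
                  (forall e, hd e == v -> 0 <= alpha e) /\
                  \sum_(e | hd e == v) alpha e = 1]]
  end.

(* tau' is defined by recursion along the topological order; n rounds of
   the recursive step suffice, since each vertex only refers to tails of
   its in-edges, which have smaller index. *)
Definition tau' (R : realType) (n m : nat) (tl hd : 'I_m -> 'I_n)
    (len : 'I_m -> R) (q : R) : 'I_n -> option int -> \bar R :=
  iter n (tau'_step tl hd len q) (fun _ _ => -oo%E).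

(* Main.v *)
Require Import Defs.
From HB Require Import structures.
From mathcomp Require Import all_boot all_order all_algebra.
From mathcomp Require Import all_classical all_reals all_analysis.
Import Order.TTheory GRing.Theory Num.Theory.
Local Open Scope ring_scope.
From mathcomp Require Import ring lra.
Set Implicit Arguments. Unset Strict Implicit. Unset Printing Implicit Defensive.
Section S.
Variables (R : realType) (n m : nat) (tl hd : 'I_m -> 'I_n) (len : 'I_m -> R).
Hypothesis Htop : forall e, (val (tl e) < val (hd e))%N.

Lemma is_path_ge u p v : is_path tl hd u p v ->
  (u <= val v)%N /\ (p != [::] -> (u < val v)%N).
Proof.
elim: p u => [|e p IH] u /=; first by move/eqP->.
case/andP => /eqP <- /IH [h1 _]; split => // [|_]; last exact: leq_trans (Htop e) h1.
exact: leq_trans (ltnW (Htop e)) h1.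
Qed.

Lemma is_path_rcons u p e v : is_path tl hd u (rcons p e) v =
  is_path tl hd u p (tl e) && (hd e == v).
Proof.
elim: p u => [|e' p IH] u /=; first by rewrite eq_sym.
by rewrite IH andbA.
Qed.

Lemma path_len_rcons p e : path_len len (rcons p e) = path_len len p + len e.
Proof. by rewrite /path_len -cats1 big_cat big_seq1. Qed.

Lemma path_len_nil : path_len len [::] = 0.
Proof. by rewrite /path_len big_nil. Qed.

Definition lst (p : seq 'I_m) : option 'I_m := ohead (rev p).
Definition pre (p : seq 'I_m) := rev (behead (rev p)).
Lemma lst_rcons p e : lst (rcons p e) = Some e.
Proof. by rewrite /lst rev_rcons. Qed.
Lemma pre_rcons p e : pre (rcons p e) = p.
Proof. by rewrite /pre rev_rcons /= revK. Qed.
Lemma lstP p e : lst p = Some e -> p = rcons (pre p) e.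
Proof. by case/lastP: p => [|p e'] //; rewrite lst_rcons pre_rcons => -[->]. Qed.

Notation tau := (tau tl hd len).

Lemma tau_mono v x y : x <= y -> (tau v x <= tau v y)%E.
Proof.
move=> xy; apply/ereal_infP => _ [L [s [us hs ys]] <-]; apply: ereal_inf_lbound.
exists L => //; exists s; split => //; exact: le_trans xy ys.
Qed.

Lemma tau_le v x L s : uniq s ->
  (forall p, p \in s -> is_path tl hd 0 p v /\ path_len len p <= L) ->
  x <= (size s)%:R -> (tau v x <= L%:E)%E.
Proof. by move=> us hs xs; apply: ereal_inf_lbound; exists L => //; exists s. Qed.

Lemma tau_lt v x L : (tau v x < L%:E)%E -> exists s, [/\ uniq s,
  (forall p, p \in s -> is_path tl hd 0 p v /\ path_len len p <= L) &
  x <= (size s)%:R].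
Proof.
case/ereal_inf_lt => _ [L' [s [us hs xs]] <-]; rewrite lte_fin => LL.
exists s; split => // p /hs [h1 h2]; split => //; exact: le_trans h2 (ltW LL).
Qed.

Lemma step_ext q f g v y : (forall u, (val u < val v)%N -> f u = g u) ->
  tau'_step tl hd len q f v y = tau'_step tl hd len q g v y.
Proof.
move=> fg; case: y => // j /=; case: ifP => // _.
congr ereal_inf; apply/seteqP; split => _ [a Ha <-]; exists a => //;
  apply: eq_bigr => e /eqP he; by rewrite fg // -he Htop.
Qed.

Definition FF q k := iter k (tau'_step tl hd len q) (fun _ _ => -oo%E).

Lemma F_stab q k v : (val v < k)%N -> FF q k v = FF q k.+1 v.
Proof.
elim: k v => // k IH v vk; rewrite /FF /=; apply/funext => y.
apply: step_ext => u uv; apply: IH; exact: leq_trans uv vk.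
Qed.

Lemma F_fix q v y : tau' tl hd len q v y = tau'_step tl hd len q (tau' tl hd len q) v y.
Proof. by rewrite /tau' -/(FF q n) (@F_stab q n v (ltn_ord v)). Qed.

Lemma F_None q v : tau' tl hd len q v None = -oo%E.
Proof. by rewrite F_fix. Qed.

End S.
Section Reals.
Variable (R : realType).

Lemma exprzE (q : R) (z : int) : 0 < q -> q ^ z = expR (z%:~R * ln q).
Proof.
move=> q0.
have hp : forall k : nat, q ^+ k = expR (k%:R * ln q).
  by move=> k; rewrite -[LHS]lnK ?posrE ?exprn_gt0 // lnXn // mulr_natl.
case: z => k; first by rewrite -exprnP hp pmulrn.
by rewrite NegzE -invr_expz -exprnP hp -expRN intrN mulNr pmulrn.
Qed.

Lemma le_from_gt (x M : \bar R) :
  (forall L : R, (M < L%:E)%E -> (x <= L%:E)%E) -> (x <= M)%E.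
Proof.
case: M => [r| |] h.
- apply/lee_addgt0Pr => e e0; rewrite -EFinD; apply: h; rewrite lte_fin; lra.
- by rewrite leey.
- case: x h => [x| |] h //.
  + by have := h (x - 1) (ltNyr _); rewrite lee_fin => H; exfalso; lra.
  + by have := h 0 (ltNyr _).
Qed.

Lemma lt_addE (x : \bar R) (r L : R) : (x + r%:E < L%:E)%E -> (x < (L - r)%:E)%E.
Proof. by case: x => [x| |] //=; rewrite ?lte_fin ?ltNyr // => h; lra. Qed.

Lemma le_addE (x : \bar R) (r L : R) : (x <= (L - r)%:E)%E -> (x + r%:E <= L%:E)%E.
Proof. by case: x => [x| |] //=; rewrite ?lee_fin ?leNye // => h; lra. Qed.

End Reals.
Section Main.
Variables (R : realType) (n m : nat) (tl hd : 'I_m -> 'I_n) (len : 'I_m -> R).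
Hypothesis Htop : forall e, (val (tl e) < val (hd e))%N.
Variable q : R.
Hypotheses (q0 : 0 < q) (lq0 : 0 < ln q).

Notation tau := (tau tl hd len).
Notation F := (tau' tl hd len q).

Lemma nil_path0 p v : val v = 0%N -> is_path tl hd 0 p v -> p = [::].
Proof. move=> v0 /(is_path_ge Htop) [_ h]; case: p h => // e p /(_ isT); by rewrite v0. Qed.

Lemma path_nonnil p v : val v != 0%N -> is_path tl hd 0 p v ->
  exists p' e, [/\ p = rcons p' e, is_path tl hd 0 p' (tl e) & hd e == v].
Proof.
move=> v0; case/lastP: p => [|p e] /=; first by rewrite eq_sym (negPf v0).
by rewrite is_path_rcons => /andP[h1 h2]; exists p, e.
Qed.

Lemma count_sum v (s : seq (seq 'I_m)) :
  (forall p, p \in s -> exists e, hd e == v /\ lst p = Some e) ->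
  (\sum_(e | hd e == v) count (fun p => lst p == Some e) s = size s)%N.
Proof.
elim: s => [_|p s IH hs] /=; first by rewrite big1.
rewrite big_split /= IH; last by move=> p' hp'; apply: hs; rewrite inE hp' orbT.
have [e [he hl]] := hs p (mem_head _ _).
rewrite (bigD1 e) //= hl eqxx big1 ?add0n ?add1n // => e' /andP[_ ne'].
by case: eqP => // -[E]; rewrite E eqxx in ne'.
Qed.

Lemma mainlem (k : nat) : forall v : 'I_n, (val v < k)%N -> forall j : int,
  (tau v (q ^ (j - (val v).+1%:Z)) <= F v (Some j))%E /\
  (F v (Some j) <= tau v (q ^ j))%E.
Proof.
elim: k => // k IH v vk j.
have qj0 : 0 < q ^ j := exprz_gt0 j q0.
rewrite F_fix //=.
case: (eqVneq (val v) 0%N) => v0.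
- rewrite v0 /=.
  case: ifP => qj.
  + split.
    * apply: (tau_le (L := 0) (s := [:: [::]])) => //.
        by move=> p; rewrite inE => /eqP ->; rewrite path_len_nil /= v0.
      rewrite exprzE // in qj; apply: le_trans qj; rewrite exprzE // ler_expR ler_pM2r //.
      by rewrite ler_int lerBlDr lerDl.
    * apply/ereal_infP => _ [L [s [us hs xs]] <-].
      case: s us hs xs => [|p s] us hs xs; first by rewrite /= in xs; exfalso; lra.
      have [hp hl] := hs p (mem_head _ _).
      by rewrite (nil_path0 v0 hp) path_len_nil in hl; rewrite lee_fin.
  + split; first by rewrite leey.
    apply/ereal_infP => _ [L [s [us hs xs]] <-]; exfalso.
    have sub : {subset s <= [:: [::]]}.
      by move=> p /hs [hp _]; rewrite (nil_path0 v0 hp) mem_head.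
    have := uniq_leq_size us sub => /= hs1.
    have : (size s)%:R <= 1%:R :> R by rewrite ler_nat.
    by move=> h; move: qj; rewrite (le_trans xs h).
- split.
  + apply/ereal_infP => _ [a [a0 a1] <-].
    apply: le_from_gt => L ML.
    pose je e := Num.floor (j%:~R + ln (a e) / ln q).
    have H : forall e, exists s, if (hd e == v) && (a e != 0) then
        [/\ uniq s, (forall p, p \in s -> is_path tl hd 0 p (tl e) /\ path_len len p <= L - len e) &
         q ^ (je e - (val v)%:Z) <= (size s)%:R] else s = [::].
      move=> e; case: (boolP ((hd e == v) && (a e != 0))) => [/andP[he ae]|_] /=; last by exists [::].
      apply: tau_lt.
      have hlt : (F (tl e) (Some (je e)) < (L - len e)%:E)%E.
        apply: lt_addE; apply: le_lt_trans ML.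
        have := @le_bigmax_cond _ _ _ (-oo%E) e (fun e0 => hd e0 == v) (fun e0 => (F (tl e0) (if a e0 == 0%R then None else Some (je e0)) + (len e0)%:E)%E) he.
        by rewrite /= (negPf ae).
      have tk : (val (tl e) < k)%N by rewrite (leq_trans (Htop e)) // (eqP he).
      apply: le_lt_trans hlt; apply: le_trans (IH (tl e) tk (je e)).1; apply: tau_mono.
      rewrite !exprzE // ler_expR ler_pM2r // ler_int lerD2l lerN2 lez_nat.
      by rewrite -(eqP he) Htop.
    have [S HS] := choice H.
    pose s := [seq rcons p e | e <- index_enum 'I_m, p <- S e].
    apply: (tau_le (s := s)).
    * rewrite allpairs_uniq_dep ?index_enum_uniq //.
        by move=> e _; case: ifP (HS e) => _; [case | move->].
      by move=> [e1 p1] [e2 p2] _ _ /= /rcons_inj [-> ->].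
    * move=> p /allpairsPdep [e [p' [_ hp' ->]]].
      move: (HS e); case: ifP => [/andP[he ae] [_ hS _] | _ Se]; last by rewrite Se in hp'.
      have [h1 h2] := hS _ hp'.
      rewrite is_path_rcons h1 he path_len_rcons; split => //; lra.
    * rewrite size_allpairs_dep sumnE big_map natr_sum.
      rewrite (bigID (fun e => hd e == v)) /=.
      apply: (@le_trans _ _ (\sum_(e | hd e == v) (size (S e))%:R)); last first.
        by rewrite lerDl sumr_ge0.
      rewrite -[X in X <= _]mul1r -{1}a1 mulr_suml; apply: ler_sum => e he.
      case: (eqVneq (a e) 0) => ae; first by rewrite ae mul0r.
      move: (HS e); rewrite he ae /= => -[_ _ hsz]; apply: le_trans hsz.
      have ap : 0 < a e by rewrite lt_def ae a0.
      rewrite !exprzE // -[a e]lnK ?posrE // -expRD ler_expR.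
      have := floorD1_gt (j%:~R + ln (a e) / ln q); rewrite -/(je e) intrD => hJ.
      have : (j%:~R + ln (a e) / ln q) * ln q < ((je e)%:~R + 1%:~R) * ln q.
        by rewrite ltr_pM2r.
      rewrite mulrDl divfK ?gt_eqF // !intrB.
      move: (je e) => J; rewrite /=.
      nra.
  + apply/ereal_infP => _ [L [s [us hs xs]] <-].
    pose N := size s.
    have N0 : 0 < N%:R :> R by exact: lt_le_trans qj0 xs.
    pose cnt e := count (fun p => lst p == Some e) s.
    pose a e := (cnt e)%:R / N%:R : R.
    have hlast : forall p, p \in s -> exists e, hd e == v /\ lst p = Some e.
      move=> p /hs [hp _]; have [p' [e [-> _ he]]] := path_nonnil v0 hp.
      by exists e; rewrite lst_rcons.
    have asum : \sum_(e | hd e == v) a e = 1.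
      by rewrite -mulr_suml -natr_sum count_sum // divff // gt_eqF.
    apply: ge_ereal_inf; eexists.
      exists a => //; split => // e _; exact: divr_ge0.
    apply: bigmax_le => [|e he]; first exact: leNye.
    rewrite /=; case: ifP => ae; first by rewrite F_None //; apply: le_addE; exact: leNye.
    apply: le_addE.
    have tk : (val (tl e) < k)%N by rewrite (leq_trans (Htop e)) // (eqP he).
    apply: le_trans (IH (tl e) tk _).2 _.
    apply: (tau_le (s := [seq pre p | p <- s & lst p == Some e])).
    * rewrite map_inj_in_uniq ?filter_uniq // => p1 p2.
      rewrite !mem_filter => /andP[/eqP h1 _] /andP[/eqP h2 _] E.
      by rewrite (lstP h1) (lstP h2) E.
    * move=> p /mapP [p0]; rewrite mem_filter => /andP[/eqP hl hp0] ->.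
      have [hp hlen] := hs _ hp0.
      rewrite (lstP hl) is_path_rcons path_len_rcons in hp hlen.
      case/andP: hp => hp _; split => //; lra.
    * rewrite size_map size_filter.
      have ap : 0 < a e by rewrite lt_def ae divr_ge0.
      apply: (@le_trans _ _ (a e * q ^ j)).
        rewrite !exprzE // -[a e in X in _ <= X]lnK ?posrE // -expRD ler_expR.
        have := floor_le (j%:~R + ln (a e) / ln q) => hJ.
        have : (Num.floor (j%:~R + ln (a e) / ln q))%:~R * ln q <=
               (j%:~R + ln (a e) / ln q) * ln q by rewrite ler_pM2r.
        rewrite mulrDl divfK ?gt_eqF //; lra.
      apply: le_trans (ler_wpM2l (ltW ap) xs) _.
      by rewrite /a divfK // gt_eqF.
Qed.

End Main.

Theorem lemma1 (R : realType) (n m : nat) (tl hd : 'I_m -> 'I_n)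
    (len : 'I_m -> R)
    (Htop : forall e, (val (tl e) < val (hd e))%N)
    (Hsimple : injective (fun e => (tl e, hd e)))
    (eps : R) (Heps : 0 < eps) (i : 'I_n) (j : int)
    (Hij : (val i).+1%:Z <= j) :
  let q := (1 + eps) `^ (n.+1%:R)^-1 in
  (tau tl hd len i (q ^ (j - (val i).+1%:Z)) <= tau' tl hd len q i (Some j))%E /\
  (tau' tl hd len q i (Some j) <= tau tl hd len i (q ^ j))%E.
Proof.
move=> q.
have e1 : 1 < 1 + eps by rewrite ltrDl.
have q0 : 0 < q by apply: powR_gt0; lra.
have lq : 0 < ln q.
  by rewrite /q ln_powR mulr_gt0 // ?invr_gt0 ?ltr0Sn // ln_gt0.
exact: (mainlem len Htop q0 lq (ltn_ord i) j).
Qed.
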